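(* Let $\mathfrak{A}$ be a $(\circ,\wedge,\mathsf{A})$-algebra that is completely representable by partial functions. Then composition in $\mathfrak{A}$ is completely left-distributive over joins and completely left-distributive over meets: for every $a\in\mathfrak{A}$, (i) for every $S\subseteq\mathfrak{A}$ such that $\bigvee S$ exists, $\bigvee\{a\circ s\mid s\in S\}$ exists and equals $a\circ\bigvee S$; (ii) for every nonempty $S\subseteq\mathfrak{A}$ such that $\bigwedge S$ exists, $\bigwedge\{a\circ s\mid s\in S\}$ exists and equals $a\circ\bigwedge S$.
   Context: A $(\circ,\wedge,\mathsf{A})$-algebra is a set with two binary operations $\circ,\wedge$ and one unary operation $\mathsf{A}$. An algebra of partial functions of this signature is a set of partial functions, with base $X$ the union of all their domains and ranges, closed under: composition $f\circ g=\{(x,z)\mid \exists y\,(x,y)\in f,(y,z)\in g\}$ (apply $f$ first, then $g$); intersection; antidomain $\mathsf{A}(f)=\{(x,x)\mid x\in X, x\notin\mathrm{dom}(f)\}$. A representation by partial functions is an isomorphism onto such an algebra. The order is $a\le b\iff a\wedge b=a$. A representation $\theta$ is complete if for every nonempty $S$ with $\bigwedge S$ existing, $\theta(\bigwedge S)=\bigcap\theta[S]$ (equivalently, for every $S$ with $\bigvee S$ existing, $\theta(\bigvee S)=\bigcup\theta[S]$). An algebra is completely representable if it has a complete representation. *)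

(* Defs.v *)
From Stdlib Require Import Classical.

Set Implicit Arguments.

Record CMAAlg := {
  car :> Type;
  comp : car -> car -> car;
  meet : car -> car -> car;
  antid : car -> car
}.

Definition ale (Al : CMAAlg) (a b : Al) : Prop := meet Al a b = a.

Definition is_ub {Al : CMAAlg} (S : Al -> Prop) (u : Al) : Prop :=
  forall s, S s -> ale Al s u.
Definition is_lb {Al : CMAAlg} (S : Al -> Prop) (l : Al) : Prop :=
  forall s, S s -> ale Al l s.

Definition is_join {Al : CMAAlg} (S : Al -> Prop) (j : Al) : Prop :=
  is_ub S j /\ forall u, is_ub S u -> ale Al j u.
Definition is_meet {Al : CMAAlg} (S : Al -> Prop) (m : Al) : Prop :=
  is_lb S m /\ forall l, is_lb S l -> ale Al l m.

Definition rel (X : Type) := X -> X -> Prop.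

Definition functional X (f : rel X) : Prop :=
  forall x y z, f x y -> f x z -> y = z.

Definition rel_eq X (f g : rel X) : Prop := forall x y, f x y <-> g x y.

(* composition: apply f first, then g *)
Definition rcomp X (f g : rel X) : rel X :=
  fun x z => exists y, f x y /\ g y z.
Definition rinter X (f g : rel X) : rel X := fun x y => f x y /\ g x y.
Definition rdom X (f : rel X) (x : X) : Prop := exists y, f x y.
Definition rran X (f : rel X) (y : X) : Prop := exists x, f x y.
Definition rantid X (B : X -> Prop) (f : rel X) : rel X :=
  fun x y => x = y /\ B x /\ ~ rdom f x.

Definition base {X} {Al : CMAAlg} (theta : Al -> rel X) (x : X) : Prop :=
  exists a, rdom (theta a) x \/ rran (theta a) x.

Definition representation {X} {Al : CMAAlg} (theta : Al -> rel X) : Prop :=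
  (forall a, functional (theta a)) /\
  (forall a b, rel_eq (theta a) (theta b) -> a = b) /\
  (forall a b, rel_eq (theta (comp Al a b)) (rcomp (theta a) (theta b))) /\
  (forall a b, rel_eq (theta (meet Al a b)) (rinter (theta a) (theta b))) /\
  (forall a, rel_eq (theta (antid Al a)) (rantid (base theta) (theta a))).

Definition complete_representation {X} {Al : CMAAlg} (theta : Al -> rel X) : Prop :=
  representation theta /\
  forall (S : Al -> Prop) (m : Al), (exists s, S s) -> is_meet S m ->
    forall x y, theta m x y <-> (forall s, S s -> theta s x y).

Definition completely_representable (Al : CMAAlg) : Prop :=
  exists (X : Type) (theta : Al -> rel X), complete_representation theta.

Definition lcomp_img {Al : CMAAlg} (a : Al) (S : Al -> Prop) : Al -> Prop :=
  fun t => exists s, S s /\ t = comp Al a s.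

(* Main.v *)
Require Import Defs.
From Stdlib Require Import Classical.

Section S.
Variables (Al : CMAAlg) (X : Type) (theta : Al -> rel X).
Hypothesis R : representation theta.

Lemma ale_iff a b : ale Al a b <-> (forall x y, theta a x y -> theta b x y).
Proof.
  destruct R as [Hf [Hi [Hc [Hm Ha]]]].
  split.
  - intros H x y Hxy. unfold ale in H. rewrite <- H in Hxy.
    apply Hm in Hxy. destruct Hxy; auto.
  - intros H. unfold ale. apply Hi. intros x y. split.
    + intros Hx. apply Hm in Hx. destruct Hx; auto.
    + intros Hx. apply Hm. split; auto.
Qed.

Lemma comp_iff a b x z : theta (comp Al a b) x z <-> exists y, theta a x y /\ theta b y z.
Proof. destruct R as [Hf [Hi [Hc [Hm Ha]]]]. apply Hc. Qed.

Lemma phi_iff s j x z : theta (comp Al (antid Al s) j) x z <->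
  (~ rdom (theta s) x /\ theta j x z).
Proof.
  destruct R as [Hf [Hi [Hc [Hm Ha]]]].
  rewrite comp_iff. split.
  - intros [y [H1 H2]]. apply Ha in H1. destruct H1 as [-> [_ H3]]. auto.
  - intros [H1 H2]. exists x. split; auto. apply Ha. split; [reflexivity|].
    split; auto. exists j. left. exists z. auto.
Qed.

Lemma join_union (Hcomp : forall (S : Al -> Prop) (m : Al), (exists s, S s) -> is_meet S m ->
    forall x y, theta m x y <-> (forall s, S s -> theta s x y))
  S j x y : is_join S j -> theta j x y -> exists s, S s /\ theta s x y.
Proof.
  intros [Hub Hl] Hj.
  destruct (classic (exists s, S s)) as [Hne | Hemp].
  - set (T := fun t => exists s, S s /\ t = comp Al (antid Al s) j).
    set (m := comp Al (antid Al j) j).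
    assert (Hme : forall p q, ~ theta m p q).
    { intros p q Hp. apply phi_iff in Hp. destruct Hp as [H1 H2]. apply H1. exists q; auto. }
    assert (HM : is_meet T m).
    { split.
      - intros t _. apply ale_iff. intros p q Hp. exfalso; eapply Hme; eauto.
      - intros l Hl'. apply ale_iff. intros p q Hp. exfalso.
        destruct Hne as [s0 Hs0].
        assert (Hlj : forall p q, theta l p q -> ~ rdom (theta s0) p /\ theta j p q).
        { intros p' q' H. apply phi_iff. apply (proj1 (ale_iff _ _) (Hl' _ (ex_intro _ s0 (conj Hs0 eq_refl)))). auto. }
        assert (Hu : is_ub S (comp Al (antid Al l) j)).
        { intros s Hs. apply ale_iff. intros x' z' Hs'. apply phi_iff. split.
          - intros [w Hw]. assert (Hphi := proj1 (ale_iff _ _) (Hl' _ (ex_intro _ s (conj Hs eq_refl))) _ _ Hw).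
            apply phi_iff in Hphi. destruct Hphi as [Hn _]. apply Hn. exists z'; auto.
          - apply (proj1 (ale_iff _ _) (Hub s Hs)). auto. }
        assert (Hjl := proj1 (ale_iff _ _) (Hl _ Hu) p q (proj2 (Hlj _ _ Hp))).
        apply phi_iff in Hjl. destruct Hjl as [Hn _]. apply Hn. exists q; auto. }
    assert (Hne' : exists t, T t).
    { destruct Hne as [s0 Hs0]. exists (comp Al (antid Al s0) j). exists s0; auto. }
    destruct (classic (exists s, S s /\ theta s x y)) as [|Hno]; auto.
    exfalso. apply (Hme x y). apply (Hcomp T m Hne' HM). intros t [s [Hs ->]].
    apply phi_iff. split; auto. intros [w Hw].
    assert (Hjw := proj1 (ale_iff _ _) (Hub s Hs) _ _ Hw).
    destruct R as [Hf _]. assert (w = y) by (eapply Hf; eauto). subst.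
    apply Hno. eauto.
  - exfalso.
    assert (Hu : is_ub S (comp Al (antid Al j) j)).
    { intros s Hs. exfalso. apply Hemp; eauto. }
    assert (H := proj1 (ale_iff _ _) (Hl _ Hu) _ _ Hj).
    apply phi_iff in H. destruct H as [Hn _]. apply Hn. exists y; auto.
Qed.
End S.
Arguments ale_iff {Al X theta} R a b.
Arguments comp_iff {Al X theta} R a b x z.
Arguments join_union {Al X theta} R Hcomp {S j x y}.

Theorem mainTheorem10 (Al : CMAAlg) :
  completely_representable Al ->
  forall a : Al,
    (forall (S : Al -> Prop) (j : Al), is_join S j ->
       is_join (lcomp_img a S) (comp Al a j)) /\
    (forall (S : Al -> Prop) (m : Al), (exists s, S s) -> is_meet S m ->
       is_meet (lcomp_img a S) (comp Al a m)).
Proof.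
  intros [X [theta [R Hcomp]]] a. split.
  - intros S j Hj. split.
    + intros t [s [Hs ->]]. apply (ale_iff R). intros x z Hx.
      apply (comp_iff R) in Hx. apply (comp_iff R). destruct Hx as [y [H1 H2]].
      exists y. split; auto. apply (proj1 (ale_iff R _ _) (proj1 Hj s Hs)). auto.
    + intros u Hu. apply (ale_iff R). intros x z Hx.
      apply (comp_iff R) in Hx. destruct Hx as [y [H1 H2]].
      destruct (join_union R Hcomp Hj H2) as [s [Hs Hsy]].
      apply (proj1 (ale_iff R _ _) (Hu _ (ex_intro _ s (conj Hs eq_refl)))).
      apply (comp_iff R). eauto.
  - intros S m Hne Hm. split.
    + intros t [s [Hs ->]]. apply (ale_iff R). intros x z Hx.
      apply (comp_iff R) in Hx. apply (comp_iff R). destruct Hx as [y [H1 H2]].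
      exists y. split; auto. apply (proj1 (ale_iff R _ _) (proj1 Hm s Hs)). auto.
    + intros l Hl. apply (ale_iff R). intros x z Hx.
      destruct Hne as [s0 Hs0].
      assert (H0 := proj1 (ale_iff R _ _) (Hl _ (ex_intro _ s0 (conj Hs0 eq_refl))) _ _ Hx).
      apply (comp_iff R) in H0. destruct H0 as [y [Hay Hsy]].
      apply (comp_iff R). exists y. split; auto.
      apply (Hcomp S m (ex_intro _ s0 Hs0) Hm). intros s Hs.
      assert (H1 := proj1 (ale_iff R _ _) (Hl _ (ex_intro _ s (conj Hs eq_refl))) _ _ Hx).
      apply (comp_iff R) in H1. destruct H1 as [y' [Hay' Hsy']].
      destruct R as [Hf _]. assert (y' = y) by (eapply Hf; eauto). subst. auto.
Qed.
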